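(* Let $\psi\in\Psi$ satisfy $\lim_{t\to\infty}\frac{\psi(t\psi(t))}{\psi(t)}=1$. Then for every positive nonincreasing $x=x^*\in M_\psi$ and every $c>0$, $$\frac1{\log T}\int_1^T\frac{dt}{t\psi(t)}\int_0^{ct\psi(t)}x(s)ds=\frac1{\log T}\int_1^T\frac{dt}{t\psi(t)}\int_0^tx(s)ds+o(1)\quad\text{as }T\to\infty.$$
   Context: $\Psi$ is the class of concave increasing functions $\psi$ on $[0,\infty)$ with $\psi(\infty)=\infty$, $\psi(t)=O(t)$ as $t\to0$, $\psi(t)=o(t)$ as $t\to\infty$. $x^*$ denotes the nonincreasing right-continuous rearrangement of $|x|$. $M_\psi$ is the space of bounded measurable $x$ on $(0,\infty)$ with $\sup_{t>0}\frac1{\psi(t)}\int_0^tx^*(s)ds<\infty$. *)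

(* Defs.v *)
From Stdlib Require Import Reals.
From Coquelicot Require Import Coquelicot.
Open Scope R_scope.

Definition in_Psi (psi : R -> R) : Prop :=
  (forall a b l, 0 <= a -> 0 <= b -> 0 <= l <= 1 ->
     l * psi a + (1 - l) * psi b <= psi (l * a + (1 - l) * b)) /\
  (forall a b, 0 <= a -> a < b -> psi a < psi b) /\
  is_lim psi p_infty p_infty /\
  (exists K delta, 0 < delta /\
     forall t, 0 < t < delta -> Rabs (psi t) <= K * t) /\
  is_lim (fun t => psi t / t) p_infty 0.

(* x is a positive nonincreasing function on (0,oo) with x = x^*, i.e.
   nonincreasing and right-continuous on (0,oo) *)
Definition pos_decr_rearranged (x : R -> R) : Prop :=
  (forall s, 0 < s -> 0 < x s) /\
  (forall s u, 0 < s -> s <= u -> x u <= x s) /\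
  (forall s, 0 < s -> filterlim x (at_right s) (locally (x s))).

(* x belongs to M_psi (for x = x^* >= 0): bounded (measurability is automatic
   for monotone x) and sup_{t>0} (1/psi t) int_0^t x < oo *)
Definition in_M_psi (psi x : R -> R) : Prop :=
  (exists B, forall s, 0 < s -> Rabs (x s) <= B) /\
  (exists C, forall t, 0 < t -> RInt x 0 t <= C * psi t).

(* Main.v *)
Require Import Defs.
From Stdlib Require Import Reals Lra Lia Arith.
From Coquelicot Require Import Coquelicot.
Open Scope R_scope.

Ltac nz := first [ apply Rgt_not_eq; lra | apply Rlt_not_eq; lra | lra ].
Ltac fld := field; repeat split; nz.

Fixpoint Lp (c d : R) (m : nat) : list R :=
  match m with
  | O => (c :: (c + d) :: nil)%list
  | S m' => (c :: Lp (c + d) d m')%list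
  end.

Definition Sq (c d : R) (m : nat) : SF_seq := SF_seq_f2 (fun x y => x) (Lp c d m).

Lemma Lp_size c d m : (0 < seq.size (Lp c d m))%nat.
Proof. destruct m; simpl; lia. Qed.

Lemma Sq_S c d m : Sq c d (S m) = SF_cons (c, c) (Sq (c + d) d m).
Proof.
  unfold Sq. simpl Lp. rewrite SF_cons_f2 by apply Lp_size.
  reflexivity.
Qed.

Lemma Sq_h c d m : SF_h (Sq c d m) = c.
Proof. destruct m; reflexivity. Qed.

Lemma RS_Sq (h : R -> R) c d m :
  Riemann_sum h (Sq c d m) = d * h c + (match m with O => 0 | S m' => Riemann_sum h (Sq (c+d) d m') end).
Proof.
  revert c. destruct m; intros c.
  - unfold Sq; simpl. unfold Riemann_sum; simpl.
    rewrite plus_zero_r. unfold scal; simpl; unfold mult; simpl. ring.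
  - rewrite Sq_S, Riemann_sum_cons, Sq_h. simpl. unfold plus, scal; simpl; unfold mult; simpl.
    change (AbelianMonoid.plus ?x ?y) with (Rplus x y). ring_simplify (c + d - c). reflexivity.
Qed.

Lemma RS_tele (f : R -> R) d m : forall c,
  Riemann_sum (fun t => f t - f (t + d)) (Sq c d m) = d * (f c - f (c + INR (S m) * d)).
Proof.
  induction m; intros c; rewrite RS_Sq.
  - simpl. replace (c + 1 * d) with (c + d) by ring. ring.
  - rewrite IHm. rewrite (S_INR (S m)). replace (c + (INR (S m) + 1) * d) with (c + d + INR (S m) * d) by ring. change (@eq R (d * (f c - f (c + d)) + d * (f (c + d) - f (c + d + INR (S m) * d))) (d * (f c - f (c + d + INR (S m) * d)))). ring.
Qed.

Lemma Lp_cons c d m : exists y l, Lp c d m = (c :: y :: l)%list.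
Proof. destruct m; [ do 2 eexists; reflexivity |]. simpl. destruct m; do 2 eexists; reflexivity. Qed.

Lemma SF_fun_Sq (d : R) (Hd : 0 < d) m : forall c t,
  c <= t <= c + INR (S m) * d ->
  exists p, c <= p /\ p + d <= c + INR (S m) * d /\ p <= t <= p + d /\
   forall h : R -> R, SF_fun (SF_map h (Sq c d m)) 0 t = h p.
Proof.
  induction m; intros c t Ht.
  - exists c. simpl in Ht |- *. repeat split; try lra.
    intros h. unfold Sq, SF_fun; simpl.
    destruct (Rlt_dec t c); [lra|]. destruct (Rle_dec t (c + d)); [reflexivity|lra].
  - destruct (Rlt_dec t (c + d)) as [Hlt|Hge].
    + exists c. rewrite !S_INR in *. assert (0 <= INR m) by apply pos_INR.
      repeat split; try nra. intros h.
      rewrite Sq_S. unfold SF_fun. simpl.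
      destruct (Rlt_dec t c); [lra|].
      destruct (Lp_cons (c + d) d m) as [y [l Hl]]. rewrite Hl. simpl.
      destruct (Rlt_dec t (c + d)); [reflexivity|lra].
    + apply Rnot_lt_le in Hge.
      destruct (IHm (c + d) t) as [p [H1 [H2 [H3 H4]]]].
      { rewrite !S_INR in *. split; lra. }
      exists p. rewrite !S_INR in *. repeat split; try lra.
      intros h. rewrite <- (H4 h). rewrite Sq_S. unfold SF_fun. simpl.
      destruct (Rlt_dec t c); [lra|].
      destruct (Lp_cons (c + d) d m) as [y [l Hl]]. rewrite Hl. simpl.
      idtac.
      destruct (Rlt_dec t (c + d)); [lra|reflexivity].
Qed.

Lemma Lp_sorted c d m : 0 <= d -> sorted Rle (Lp c d m).
Proof.
  intros Hd. revert c. induction m; intros c.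
  - simpl. split; [lra|exact I].
  - destruct (Lp_cons (c + d) d m) as [y [l Hl]].
    change (Lp c d (S m)) with (c :: Lp (c + d) d m)%list.
    specialize (IHm (c + d)). rewrite Hl in IHm |- *. split; [lra|]. exact IHm.
Qed.

Lemma Lp_last' z c d m : seq.last z (Lp c d m) = c + INR (S m) * d.
Proof.
  revert c z. induction m; intros c z.
  - simpl. ring.
  - change (Lp c d (S m)) with (c :: Lp (c + d) d m)%list.
    simpl seq.last. rewrite IHm.
    rewrite !S_INR. ring.
Qed.
Lemma Lp_last c d m : seq.last 0 (Lp c d m) = c + INR (S m) * d.
Proof. apply Lp_last'. Qed.

Lemma Lp_head c d m : seq.head 0 (Lp c d m) = c.
Proof. destruct (Lp_cons c d m) as [y [l Hl]]. rewrite Hl. reflexivity. Qed.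

Lemma SF_transport a b a' b' (phi : StepFun a' b') : a = a' -> b = b' ->
  {phi' : StepFun a b | (forall t, phi' t = phi t) /\ RiemannInt_SF phi' = RiemannInt_SF phi}.
Proof. intros H1 H2. subst. exists phi. split; auto. Qed.

Lemma mono_Riemann (f : R -> R) a b : a < b ->
  (forall u v, a <= u -> u <= v -> v <= b -> f v <= f u) ->
  Riemann_integrable f a b.
Proof.
  intros Hab Hf eps.
  assert (HD : 0 <= f a - f b) by (assert (f b <= f a) by (apply Hf; lra); lra).
  destruct (nfloor_ex ((b - a) * (f a - f b) / eps)) as [m Hm].
  { apply Rmult_le_pos; [apply Rmult_le_pos; lra|]. left. apply Rinv_0_lt_compat, cond_pos. }
  assert (Hm1 : 0 < INR m + 1) by (pose proof (pos_INR m); lra).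
  set (d := (b - a) / (INR m + 1)).
  assert (Hd : 0 < d) by (unfold d; apply Rdiv_lt_0_compat; lra).
  assert (Hb : a + INR (S m) * d = b) by (unfold d; rewrite S_INR; field; lra).
  set (S := Sq a d m).
  assert (pr : SF_sorted Rle S).
  { unfold S, Sq. apply SF_sorted_f2. apply Lp_sorted. lra. }
  assert (Hlx : SF_lx S = Lp a d m) by (unfold S, Sq; apply SF_lx_f2, Lp_size).
  destruct (SF_transport a b _ _ (SF_compat_le (SF_map f S) (SF_map_sort f S Rle pr))) as [phi [Hphi _]].
  { rewrite SF_map_lx, Hlx, Lp_head. reflexivity. }
  { rewrite SF_map_lx, Hlx, Lp_last. auto. }
  set (g := fun t => f t - f (t + d)).
  destruct (SF_transport a b _ _ (SF_compat_le (SF_map g S) (SF_map_sort g S Rle pr))) as [psi [Hpsi Hint]].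
  { rewrite SF_map_lx, Hlx, Lp_head. reflexivity. }
  { rewrite SF_map_lx, Hlx, Lp_last. auto. }
  exists phi, psi. split.
  - intros t Ht. rewrite Rmin_left, Rmax_right in Ht by lra.
    rewrite Hphi, Hpsi. simpl.
    destruct (SF_fun_Sq d Hd m a t) as [p [H1 [H2 [H3 H4]]]]; [lra|].
    fold S in H4. rewrite !H4. unfold g.
    assert (f t <= f p) by (apply Hf; lra).
    assert (f (p + d) <= f t) by (apply Hf; lra).
    rewrite Rabs_left1 by lra. lra.
  - rewrite Hint. rewrite <- Riemann_sum_compat. unfold g, S. rewrite RS_tele.
    rewrite Hb. rewrite Rabs_right by (apply Rle_ge, Rmult_le_pos; lra).
    unfold d. destruct eps as [e He]. simpl in *.
    apply Rmult_lt_reg_r with (INR m + 1); [lra|].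
    replace ((b - a) / (INR m + 1) * (f a - f b) * (INR m + 1)) with ((b - a) * (f a - f b)) by (field; lra).
    assert ((b - a) * (f a - f b) / e * e = (b - a) * (f a - f b)) by (field; lra).
    nra.
Qed.

Lemma mono_ex_RInt (f : R -> R) a b : a <= b ->
  (forall u v, a <= u -> u <= v -> v <= b -> f v <= f u) ->
  ex_RInt f a b.
Proof.
  intros Hab Hf. destruct (Rle_lt_or_eq_dec _ _ Hab) as [H|H].
  - apply ex_RInt_Reals_1. apply mono_Riemann; auto.
  - subst. apply ex_RInt_point.
Qed.


Section PsiProps.
Variable psi : R -> R.
Hypothesis Hconc : forall a b l, 0 <= a -> 0 <= b -> 0 <= l <= 1 ->
     l * psi a + (1 - l) * psi b <= psi (l * a + (1 - l) * b).
Hypothesis Hinc : forall a b, 0 <= a -> a < b -> psi a < psi b.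

Lemma psi_le a b : 0 <= a -> a <= b -> psi a <= psi b.
Proof. intros. destruct (Req_dec a b); [subst; lra|]. left; apply Hinc; lra. Qed.

Lemma psi_local t y : 0 < t -> Rabs (y - t) <= t / 2 ->
  Rabs (psi y - psi t) <= 2 * Rabs (y - t) / t * (psi (2 * t) - psi (t / 2)).
Proof.
  intros Ht Hy.
  assert (W0 : psi (t/2) < psi t) by (apply Hinc; lra).
  assert (W1 : psi t < psi (2*t)) by (apply Hinc; lra).
  destruct (Rle_or_lt t y) as [Hty|Hyt].
  - rewrite (Rabs_right (y - t)) in Hy |- * by lra.
    assert (psi t <= psi y) by (apply psi_le; lra).
    rewrite Rabs_right by lra.
    assert (0 <= y - t) by lra. assert (y <= t + t/2) by lra. set (h := y - t) in *.
    set (l := h / (t/2 + h)).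
    assert (Hl : 0 <= l <= 1).
    { unfold l. split. apply Rdiv_le_0_compat; lra.
      apply Rmult_le_reg_r with (t/2+h); [lra|]. unfold Rdiv. rewrite Rmult_assoc, Rinv_l by (apply Rgt_not_eq; lra). lra. }
    pose proof (Hconc (t/2) y l ltac:(lra) ltac:(lra) Hl) as Hc.
    replace (l * (t / 2) + (1 - l) * y) with t in Hc by (unfold l, h; fld).
    assert (psi y <= psi (2*t)) by (apply psi_le; lra).
    assert (Hl2 : l <= 2 * h / t).
    { unfold l. apply Rmult_le_reg_r with ((t/2+h) * t); [nra|].
      unfold Rdiv. field_simplify; try lra. nra. }
    assert (psi y - psi t <= l * (psi y - psi (t/2))) by lra.
    assert (l * (psi y - psi (t/2)) <= l * (psi (2*t) - psi (t/2))) by (apply Rmult_le_compat_l; lra).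
    assert (l * (psi (2*t) - psi (t/2)) <= 2 * h / t * (psi (2*t) - psi (t/2))) by (apply Rmult_le_compat_r; lra).
    lra.
  - rewrite (Rabs_left (y - t)) in Hy |- * by lra.
    assert (psi y <= psi t).
    { destruct (Rle_or_lt 0 y). apply psi_le; lra. lra. }
    rewrite Rabs_left1 by lra.
    assert (0 < t - y) by lra. assert (t/2 <= y) by lra. set (h := t - y) in *.
    set (l := 2 * h / t).
    assert (Hl : 0 <= l <= 1).
    { unfold l, h. split. apply Rdiv_le_0_compat; lra.
      apply Rmult_le_reg_r with t; [lra|]. unfold Rdiv. rewrite Rmult_assoc, Rinv_l by (apply Rgt_not_eq; lra). lra. }
    pose proof (Hconc (t/2) t l ltac:(lra) ltac:(lra) Hl) as Hc.
    replace (l * (t / 2) + (1 - l) * t) with y in Hc by (unfold l, h; fld).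
    assert (psi t - psi y <= l * (psi t - psi (t/2))) by lra.
    assert (l * (psi t - psi (t/2)) <= l * (psi (2*t) - psi (t/2))) by (apply Rmult_le_compat_l; lra).
    replace (- (y - t)) with h by (unfold h; ring). fold l. lra.
Qed.

Lemma psi_cont t : 0 < t -> continuous psi t.
Proof.
  intros Ht. apply continuity_pt_filterlim.
  unfold continuity_pt, continue_in, limit1_in, limit_in. simpl. unfold R_dist.
  intros eps Heps.
  set (W := psi (2 * t) - psi (t / 2)).
  assert (HW : 0 < W) by (unfold W; assert (psi (t/2) < psi (2*t)) by (apply Hinc; lra); lra).
  exists (Rmin (t/2) (eps * t / (4 * W))). split.
  { apply Rmin_glb_lt. lra. apply Rdiv_lt_0_compat; nra. }
  intros y [_ Hy].
  assert (Hy1 : Rabs (y - t) <= t/2) by (pose proof (Rmin_l (t/2) (eps * t / (4 * W))); lra).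
  assert (Hy2 : Rabs (y - t) < eps * t / (4 * W)) by (pose proof (Rmin_r (t/2) (eps * t / (4 * W))); lra).
  pose proof (psi_local t y Ht Hy1). fold W in H.
  eapply Rle_lt_trans; [exact H|].
  apply Rmult_lt_reg_r with (t / (2*W)). apply Rdiv_lt_0_compat; lra.
  replace (2 * Rabs (y - t) / t * W * (t / (2 * W))) with (Rabs (y - t)) by (fld).
  replace (eps * (t / (2 * W))) with (2 * (eps * t / (4 * W))) by (fld).
  pose proof (Rabs_pos (y - t)). lra.
Qed.

Lemma psi_pos (HO : exists K delta, 0 < delta /\ forall t, 0 < t < delta -> Rabs (psi t) <= K * t) :
  forall t, 0 < t -> 0 < psi t.
Proof.
  destruct HO as [K [del [Hdel HK]]].
  intros t Ht. apply Rnot_le_lt. intros Hn.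
  set (u := Rmin t del / 2).
  assert (Hu : 0 < u < t /\ u < del).
  { unfold u. pose proof (Rmin_l t del). pose proof (Rmin_r t del).
    assert (0 < Rmin t del) by (apply Rmin_glb_lt; lra). lra. }
  assert (Hpu : psi u < 0) by (assert (psi u < psi t) by (apply Hinc; lra); lra).
  set (w := Rmin (u/2) (- psi u / (2 * (Rabs K + 1)))).
  assert (HA : 0 < Rabs K + 1) by (pose proof (Rabs_pos K); lra).
  assert (Hw : 0 < w /\ w < u).
  { unfold w. pose proof (Rmin_l (u/2) (- psi u / (2 * (Rabs K + 1)))).
    assert (0 < Rmin (u/2) (- psi u / (2 * (Rabs K + 1)))).
    { apply Rmin_glb_lt. lra. apply Rdiv_lt_0_compat; lra. }
    lra. }
  assert (Hw2 : w * (Rabs K + 1) <= - psi u / 2).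
  { assert (w <= - psi u / (2 * (Rabs K + 1))) by apply Rmin_r.
    apply Rmult_le_compat_r with (r := Rabs K + 1) in H; [|lra].
    replace (- psi u / (2 * (Rabs K + 1)) * (Rabs K + 1)) with (- psi u / 2) in H by (fld). lra. }
  assert (H1 : psi w < psi u) by (apply Hinc; lra).
  assert (H2 : Rabs (psi w) <= K * w) by (apply HK; lra).
  assert (K <= Rabs K) by apply Rle_abs.
  assert (- Rabs (psi w) <= psi w) by (pose proof (Rle_abs (- psi w)); rewrite Rabs_Ropp in *; lra).
  nra.
Qed.

End PsiProps.


Section FProps.
Variable x : R -> R.
Variable B : R.
Hypothesis Hxpos : forall s, 0 < s -> 0 < x s.
Hypothesis Hxdec : forall s u, 0 < s -> s <= u -> x u <= x s.
Hypothesis HB : forall s, 0 < s -> Rabs (x s) <= B.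

Lemma x_ex p q : 0 <= p -> p <= q -> ex_RInt x p q.
Proof.
  intros Hp Hpq.
  set (g := fun s => if Rle_dec s 0 then B else x s).
  apply ex_RInt_ext with g.
  { intros s Hs. rewrite Rmin_left, Rmax_right in Hs by lra. unfold g.
    destruct (Rle_dec s 0); [lra|reflexivity]. }
  apply mono_ex_RInt; auto.
  intros u v Hu Huv Hv. unfold g.
  destruct (Rle_dec v 0); destruct (Rle_dec u 0); try lra.
  - pose proof (HB v ltac:(lra)). pose proof (Rle_abs (x v)). lra.
  - apply Hxdec; lra.
Qed.

Definition F (t : R) : R := RInt x 0 t.

Lemma F_diff p q : 0 <= p -> p <= q -> F q - F p = RInt x p q.
Proof.
  intros. unfold F. rewrite <- (RInt_Chasles x 0 p q) by (apply x_ex; lra).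
  unfold plus; simpl. ring.
Qed.

Lemma F_mono p q : 0 <= p -> p <= q -> F p <= F q.
Proof.
  intros. assert (0 <= RInt x p q).
  { apply RInt_ge_0; auto. apply x_ex; lra. intros s Hs. left; apply Hxpos; lra. }
  rewrite <- F_diff in H1; auto. lra.
Qed.

Lemma F_nonneg q : 0 <= q -> 0 <= F q.
Proof.
  intros. assert (F 0 = 0) by (unfold F; rewrite RInt_point; reflexivity).
  rewrite <- H0. apply F_mono; lra.
Qed.

Lemma F_lip p q : 0 <= p -> p <= q -> F q - F p <= B * (q - p).
Proof.
  intros. rewrite F_diff by auto.
  replace (B * (q - p)) with (RInt (fun _ => B) p q).
  2:{ rewrite RInt_const. unfold scal; simpl; unfold mult; simpl. ring. }
  apply RInt_le; auto. apply x_ex; lra. apply ex_RInt_const.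
  intros s Hs. pose proof (HB s ltac:(lra)). pose proof (Rle_abs (x s)). lra.
Qed.

Lemma F_cont y : 0 < y -> continuous F y.
Proof.
  intros Hy. apply continuity_pt_filterlim.
  unfold continuity_pt, continue_in, limit1_in, limit_in. simpl. unfold R_dist.
  intros eps Heps.
  assert (HB0 : 0 < B + 1).
  { pose proof (HB y Hy). pose proof (Rabs_pos (x y)). lra. }
  exists (Rmin (y/2) (eps / (B + 1))). split.
  { apply Rmin_glb_lt. lra. apply Rdiv_lt_0_compat; lra. }
  intros z [_ Hz].
  assert (Hz1 : Rabs (z - y) < y/2) by (pose proof (Rmin_l (y/2) (eps / (B + 1))); lra).
  assert (Hz2 : Rabs (z - y) < eps / (B+1)) by (pose proof (Rmin_r (y/2) (eps / (B + 1))); lra).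
  assert (HBe : (B + 1) * Rabs (z - y) < eps).
  { apply Rmult_lt_compat_l with (r := B + 1) in Hz2; [|lra].
    replace ((B + 1) * (eps / (B + 1))) with eps in Hz2 by (field; nz). lra. }
  pose proof (Rabs_pos (z - y)). assert (Hzpos : 0 < z) by (apply Rabs_def2 in Hz1; lra).
  destruct (Rle_or_lt y z).
  - pose proof (F_lip y z ltac:(lra) H0). pose proof (F_mono y z ltac:(lra) H0).
    rewrite (Rabs_right (z - y)) in * by lra. rewrite Rabs_right by lra. nra.
  - pose proof (F_lip z y ltac:(lra) ltac:(lra)). pose proof (F_mono z y ltac:(lra) ltac:(lra)).
    rewrite (Rabs_left1 (z - y)) in * by lra. rewrite Rabs_left1 by lra. nra.
Qed.

End FProps.


Lemma is_RInt_inv (K a b : R) : 0 < a -> a <= b -> is_RInt (fun t => K * / t) a b (K * (ln b - ln a)).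
Proof.
  intros Ha Hab.
  assert (H := is_RInt_derive (fun t => K * ln t) (fun t => K * / t) a b).
  rewrite Rmin_left, Rmax_right in H by lra.
  replace (K * (ln b - ln a)) with (minus (K * ln b) (K * ln a)).
  2:{ unfold minus, plus, opp; simpl. ring. }
  apply H.
  - intros t Ht. apply is_derive_scal. apply is_derive_ln. lra.
  - intros t Ht. apply (continuous_mult (fun _ => K) (fun t => / t)).
    apply continuous_const. apply continuous_Rinv. nz.
Qed.

Lemma RInt_inv (K a b : R) : 0 < a -> a <= b -> RInt (fun t => K * / t) a b = K * (ln b - ln a).
Proof. intros. apply is_RInt_unique, is_RInt_inv; auto. Qed.

Lemma ex_RInt_inv (K a b : R) : 0 < a -> a <= b -> ex_RInt (fun t => K * / t) a b.
Proof. intros. eexists. apply is_RInt_inv; auto. Qed.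

Section Main.
Variables psi x : R -> R.
Variables c B C : R.
Hypothesis Hconc : forall a b l, 0 <= a -> 0 <= b -> 0 <= l <= 1 ->
     l * psi a + (1 - l) * psi b <= psi (l * a + (1 - l) * b).
Hypothesis Hinc : forall a b, 0 <= a -> a < b -> psi a < psi b.
Hypothesis Hpos : forall t, 0 < t -> 0 < psi t.
Hypothesis Hxpos : forall s, 0 < s -> 0 < x s.
Hypothesis Hxdec : forall s u, 0 < s -> s <= u -> x u <= x s.
Hypothesis HB : forall s, 0 < s -> Rabs (x s) <= B.
Hypothesis Hc : 0 < c.
Hypothesis HC : forall t, 0 < t -> F x t <= C * psi t.

Definition D t := / (t * psi t) * F x (c * t * psi t) - / (t * psi t) * F x t.

Lemma tpsi_cont t : 0 < t -> continuous (fun t => t * psi t) t.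
Proof.
  intros Ht. apply (continuous_mult (fun t => t) psi). apply continuous_id.
  apply psi_cont; auto.
Qed.

Definition f1 t := / (t * psi t) * F x (c * t * psi t).
Definition f2 t := / (t * psi t) * F x t.

Lemma f1_cont t : 0 < t -> continuous f1 t.
Proof.
  intros Ht. pose proof (Hpos t Ht) as Hp.
  assert (Hi : continuous (fun t => / (t * psi t)) t).
  { apply continuous_Rinv_comp. apply tpsi_cont; auto. apply Rgt_not_eq. nra. }
  apply (continuous_mult (fun t => / (t * psi t)) (fun t => F x (c * t * psi t))); auto.
  apply (continuous_comp (fun t => c * t * psi t) (F x)).
  + apply (continuous_mult (fun t => c * t) psi).
    apply (continuous_mult (fun _ => c) (fun t => t)). apply continuous_const. apply continuous_id.
    apply psi_cont; auto.
  + apply F_cont with B; auto. assert (0 < c * t) by nra. nra.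
Qed.

Lemma f2_cont t : 0 < t -> continuous f2 t.
Proof.
  intros Ht. pose proof (Hpos t Ht) as Hp.
  assert (Hi : continuous (fun t => / (t * psi t)) t).
  { apply continuous_Rinv_comp. apply tpsi_cont; auto. apply Rgt_not_eq. nra. }
  apply (continuous_mult (fun t => / (t * psi t)) (fun t => F x t)); auto.
  apply F_cont with B; auto.
Qed.

Lemma D_cont t : 0 < t -> continuous D t.
Proof.
  intros Ht. apply (continuous_minus f1 f2). apply f1_cont; auto. apply f2_cont; auto.
Qed.

Lemma f1_ex p q : 0 < p -> p <= q -> ex_RInt f1 p q.
Proof.
  intros Hp Hpq. apply (ex_RInt_continuous (V := R_CompleteNormedModule)). rewrite Rmin_left, Rmax_right by lra.
  intros z Hz. apply f1_cont. lra.
Qed.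

Lemma f2_ex p q : 0 < p -> p <= q -> ex_RInt f2 p q.
Proof.
  intros Hp Hpq. apply (ex_RInt_continuous (V := R_CompleteNormedModule)). rewrite Rmin_left, Rmax_right by lra.
  intros z Hz. apply f2_cont. lra.
Qed.

Lemma D_ex p q : 0 < p -> p <= q -> ex_RInt D p q.
Proof.
  intros Hp Hpq. apply (ex_RInt_continuous (V := R_CompleteNormedModule)). rewrite Rmin_left, Rmax_right by lra.
  intros z Hz. apply D_cont. lra.
Qed.


Variables A0 eta : R.
Hypothesis HA0 : 1 <= A0.
Hypothesis Heta : 0 < eta <= 1.
Hypothesis Hgood : forall t, A0 <= t -> 3 <= c * psi t /\ psi (c * t * psi t) <= (1 + eta) * psi t.

Fixpoint sa (k : nat) : R := match k with O => A0 | S k' => c * sa k' * psi (sa k') end.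

Lemma sa_ge k : A0 <= sa k /\ 3 * sa k <= sa (S k).
Proof.
  induction k.
  - simpl. split; [lra|]. destruct (Hgood A0 ltac:(lra)). nra.
  - destruct IHk as [H1 H2]. assert (H3 : A0 <= sa (S k)) by lra. split; auto.
    change (sa (S (S k))) with (c * sa (S k) * psi (sa (S k))).
    destruct (Hgood (sa (S k)) H3). nra.
Qed.

Lemma sa_pos k : 0 < sa k.
Proof. destruct (sa_ge k). lra. Qed.

Lemma sa_mono k j : (k <= j)%nat -> sa k <= sa j.
Proof.
  induction 1. lra. destruct (sa_ge m). pose proof (sa_pos m). lra.
Qed.

Lemma sa_lin k : INR k <= sa k.
Proof.
  induction k. simpl. lra. rewrite S_INR. destruct (sa_ge k). lra.
Qed.

Definition ps k := psi (sa k).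
Definition l k := ln (c * ps k).
Definition Fa k := F x (sa k).
Definition v k := Fa k / ps k.
Definition C1 := Rabs C + 1.

Lemma ps_pos k : 0 < ps k.
Proof. apply Hpos, sa_pos. Qed.

Lemma ps_mono k : ps k <= ps (S k).
Proof. unfold ps. destruct (sa_ge k). pose proof (sa_pos k). apply (psi_le psi Hinc); auto; lra. Qed.

Lemma ps_step k : ps (S k) <= (1 + eta) * ps k.
Proof. unfold ps. simpl. apply Hgood. apply sa_ge. Qed.

Lemma l_ge1 k : 1 <= l k.
Proof.
  unfold l. destruct (Hgood (sa k)) as [H _]. apply sa_ge.
  rewrite <- (ln_exp 1). apply ln_le. apply exp_pos. pose proof exp_le_3. fold (ps k) in H. lra.
Qed.

Lemma l_mono k : l k <= l (S k).
Proof.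
  unfold l. apply ln_le. pose proof (ps_pos k). nra. pose proof (ps_mono k). nra.
Qed.

Lemma l_step k : l (S k) <= l k + eta.
Proof.
  unfold l. pose proof (ps_step k). pose proof (ps_pos k). pose proof (ps_pos (S k)).
  pose proof (exp_ineq1_le eta).
  rewrite <- (ln_exp eta), <- ln_mult by (try apply exp_pos; nra).
  apply ln_le. nra.
  assert (c * ps (S k) <= c * ((1 + eta) * ps k)) by (apply Rmult_le_compat_l; lra).
  assert ((1 + eta) * ps k <= exp eta * ps k) by (apply Rmult_le_compat_r; lra). nra.
Qed.

Lemma ln_sa k : ln (sa (S k)) = ln (sa k) + l k.
Proof.
  unfold l, ps. simpl. pose proof (sa_pos k). pose proof (Hpos (sa k) H).
  replace (c * sa k * psi (sa k)) with (sa k * (c * psi (sa k))) by ring.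
  apply ln_mult; nra.
Qed.

Lemma v_bounds k : 0 <= v k <= C1.
Proof.
  unfold v, Fa, C1. pose proof (ps_pos k). pose proof (sa_pos k).
  pose proof (F_nonneg x B Hxpos Hxdec HB (sa k) ltac:(lra)).
  pose proof (HC (sa k) H0). fold (ps k) in H2.
  split. apply Rdiv_le_0_compat; lra.
  apply Rmult_le_reg_r with (ps k); auto. unfold Rdiv. rewrite Rmult_assoc, Rinv_l by nz.
  pose proof (Rle_abs C). nra.
Qed.

Lemma s_ge t : A0 <= t -> t <= c * t * psi t.
Proof. intros H. destruct (Hgood t H). nra. Qed.

Lemma D_nonneg t : A0 <= t -> 0 <= D t.
Proof.
  intros H. unfold D. pose proof (Hpos t ltac:(lra)).
  pose proof (s_ge t H).
  pose proof (F_mono x B Hxpos Hxdec HB t (c * t * psi t) ltac:(lra) H1).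
  assert (0 < / (t * psi t)) by (apply Rinv_0_lt_compat; nra). nra.
Qed.

Lemma D_le k t : sa k <= t <= sa (S k) -> D t <= (Fa (S (S k)) - Fa k) / ps k * / t.
Proof.
  intros Ht. destruct (sa_ge k). pose proof (sa_pos k).
  assert (HA : A0 <= t) by lra.
  pose proof (Hpos t ltac:(lra)) as Hpt.
  assert (Hpk : ps k <= psi t) by (unfold ps; apply (psi_le psi Hinc); lra).
  pose proof (ps_pos k).
  assert (Hs : c * t * psi t <= sa (S (S k))).
  { change (sa (S (S k))) with (c * sa (S k) * psi (sa (S k))).
    assert (psi t <= psi (sa (S k))) by (apply (psi_le psi Hinc); lra).
    assert (c * t <= c * sa (S k)) by (apply Rmult_le_compat_l; lra).
    apply Rmult_le_compat; nra. }
  pose proof (s_ge t HA) as Hst.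
  assert (G1 : F x (c * t * psi t) <= Fa (S (S k))) by (apply F_mono with B; auto; lra).
  assert (G2 : Fa k <= F x t) by (apply F_mono with B; auto; lra).
  pose proof (F_mono x B Hxpos Hxdec HB t (c * t * psi t) ltac:(lra) Hst).
  unfold D.
  replace (/ (t * psi t) * F x (c * t * psi t) - / (t * psi t) * F x t)
    with ((F x (c * t * psi t) - F x t) * / (t * psi t)) by ring.
  replace ((Fa (S (S k)) - Fa k) / ps k * / t) with ((Fa (S (S k)) - Fa k) * / (t * ps k)) by (field; split; nz).
  apply Rmult_le_compat. lra. left; apply Rinv_0_lt_compat; nra. lra.
  apply Rinv_le_contravar. nra. apply Rmult_le_compat_l; lra.
Qed.

Lemma block k : RInt D (sa k) (sa (S k)) <= l (S (S k)) * v (S (S k)) - l k * v k + 3 * C1 * eta * l k.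
Proof.
  destruct (sa_ge k). pose proof (sa_pos k).
  eapply Rle_trans.
  { apply RInt_le with (g := fun t => (Fa (S (S k)) - Fa k) / ps k * / t). lra.
    apply D_ex; lra. apply ex_RInt_inv; lra.
    intros t Ht. apply D_le. lra. }
  rewrite RInt_inv by lra. rewrite ln_sa.
  replace (ln (sa k) + l k - ln (sa k)) with (l k) by ring.
  pose proof (ps_pos k) as P0. pose proof (ps_pos (S (S k))) as P2.
  pose proof (ps_step k) as S0. pose proof (ps_step (S k)) as S1.
  pose proof (ps_mono k). pose proof (ps_mono (S k)).
  pose proof (v_bounds k) as V0. pose proof (v_bounds (S (S k))) as V2.
  pose proof (l_ge1 k). pose proof (l_mono k). pose proof (l_mono (S k)).
  assert (Hr : ps (S (S k)) <= (1 + 3 * eta) * ps k).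
  { assert (ps (S (S k)) <= (1 + eta) * ((1 + eta) * ps k)) by (eapply Rle_trans; [exact S1|]; apply Rmult_le_compat_l; lra).
    nra. }
  assert (E2 : Fa (S (S k)) = v (S (S k)) * ps (S (S k))) by (unfold v; field; nz).
  assert (E0 : Fa k = v k * ps k) by (unfold v; field; nz).
  assert (Q : (Fa (S (S k)) - Fa k) / ps k = v (S (S k)) * (ps (S (S k)) / ps k) - v k).
  { rewrite E2, E0. field. nz. }
  rewrite Q.
  assert (Hq : ps (S (S k)) / ps k <= 1 + 3 * eta).
  { apply Rmult_le_reg_r with (ps k); auto. unfold Rdiv. rewrite Rmult_assoc, Rinv_l by nz. lra. }
  assert (Hq0 : 0 <= ps (S (S k)) / ps k) by (apply Rdiv_le_0_compat; lra).
  assert (v (S (S k)) * (ps (S (S k)) / ps k) <= v (S (S k)) + 3 * eta * C1).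
  { assert (v (S (S k)) * (ps (S (S k)) / ps k) <= v (S (S k)) * (1 + 3 * eta)) by (apply Rmult_le_compat_l; lra).
    nra. }
  assert (l k * v (S (S k)) <= l (S (S k)) * v (S (S k))) by (apply Rmult_le_compat_r; lra).
  nra.
Qed.

Fixpoint Asum (n : nat) : R := match n with O => 0 | S n' => Asum n' + l n' end.
Definition w k := l k * v k.

Lemma RInt_sa n : RInt D A0 (sa n) <= w (S n) + w n - w 1 - w 0 + 3 * C1 * eta * Asum n.
Proof.
  induction n.
  - simpl. rewrite RInt_point. unfold zero; simpl. lra.
  - assert (A0 <= sa n) by apply sa_ge. assert (sa n <= sa (S n)) by (apply sa_mono; lia).
    rewrite <- (RInt_Chasles D A0 (sa n) (sa (S n))) by (apply D_ex; lra).
    pose proof (block n). unfold plus; simpl. unfold w in *. simpl Asum. simpl sa in *. lra.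
Qed.

Lemma ln_sa_Asum n : ln (sa n) = ln A0 + Asum n.
Proof. induction n. simpl. ring. rewrite ln_sa, IHn. simpl. ring. Qed.

Lemma Asum_ge n : INR n <= Asum n.
Proof. induction n. simpl; lra. rewrite S_INR. simpl. pose proof (l_ge1 n). lra. Qed.

Lemma l_le n : l n <= l 0%nat + INR n * eta.
Proof. induction n. simpl; lra. rewrite S_INR. pose proof (l_step n). lra. Qed.

Lemma Asum_ge' n : INR n * l 0%nat <= Asum n.
Proof.
  induction n. simpl; lra. rewrite S_INR. simpl.
  assert (l 0%nat <= l n).
  { clear IHn. induction n. lra. pose proof (l_mono n). lra. }
  lra.
Qed.


Lemma w_bounds k : 0 <= w k <= C1 * l k.
Proof.
  unfold w. pose proof (v_bounds k). pose proof (l_ge1 k). split. nra.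
  rewrite Rmult_comm. apply Rmult_le_compat_r; lra.
Qed.

Lemma main_est N T : sa N <= T <= sa (S N) ->
  0 <= RInt D A0 T /\ RInt D A0 T <= C1 * (l (S (S N)) + l (S N)) + 3 * C1 * eta * (Asum N + l N) /\ Asum N <= ln T.
Proof.
  intros HT. destruct (sa_ge N). pose proof (sa_pos N).
  assert (HA : A0 <= T) by lra.
  assert (E : RInt D A0 (sa (S N)) = RInt D A0 T + RInt D T (sa (S N))).
  { rewrite <- (RInt_Chasles D A0 T (sa (S N))). reflexivity. apply D_ex; lra. apply D_ex; lra. }
  assert (P1 : 0 <= RInt D A0 T).
  { apply RInt_ge_0. lra. apply D_ex; lra. intros t Ht. apply D_nonneg. lra. }
  assert (P2 : 0 <= RInt D T (sa (S N))).
  { apply RInt_ge_0. lra. apply D_ex; lra. intros t Ht. apply D_nonneg. lra. }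
  pose proof (RInt_sa (S N)) as H3.
  pose proof (w_bounds (S (S N))). pose proof (w_bounds (S N)). pose proof (w_bounds 1). pose proof (w_bounds 0).
  split; [|split].
  - auto.
  - simpl Asum in H3. lra.
  - pose proof (ln_sa_Asum N). assert (0 <= ln A0) by (rewrite <- ln_1; apply ln_le; lra).
    assert (ln (sa N) <= ln T) by (apply ln_le; lra). lra.
Qed.

Lemma main_num e N : 0 < e -> 88 * C1 * eta <= e -> 40 * C1 <= e * INR N -> (1 <= N)%nat ->
  C1 * (l (S (S N)) + l (S N)) + 3 * C1 * eta * (Asum N + l N) <= e / 4 * Asum N.
Proof.
  intros He H1 H2 HN.
  set (n := INR N).
  assert (Hn : 1 <= n) by (unfold n; apply (le_INR 1); auto).
  pose proof (l_le (S (S N))) as L2. pose proof (l_le (S N)) as L1. pose proof (l_le N) as L0.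
  repeat rewrite S_INR in L2. repeat rewrite S_INR in L1. fold n in L2, L1, L0.
  pose proof (Asum_ge N) as A1. pose proof (Asum_ge' N) as A2. fold n in A1, A2.
  pose proof (l_ge1 0). pose proof (l_ge1 N).
  assert (HC1 : 1 <= C1) by (unfold C1; pose proof (Rabs_pos C); lra).
  set (l0 := l 0%nat) in *. set (A := Asum N) in *.
  assert (X : l (S (S N)) + l (S N) + 3 * eta * l N <= 5 * l0 + 8 * n * eta).
  { assert (3 * eta * l N <= 3 * eta * (l0 + n * eta)) by (apply Rmult_le_compat_l; lra).
    assert (eta * l0 <= l0) by nra. assert (n * (eta * eta) <= n * eta) by (apply Rmult_le_compat_l; nra). assert (eta <= n * eta) by nra. lra. }
  assert (Y : C1 * (l (S (S N)) + l (S N)) + 3 * C1 * eta * (A + l N) <= 5 * C1 * l0 + 11 * C1 * eta * A).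
  { assert (C1 * (l (S (S N)) + l (S N) + 3 * eta * l N) <= C1 * (5 * l0 + 8 * n * eta)) by (apply Rmult_le_compat_l; lra).
    assert (C1 * eta * n <= C1 * eta * A) by (apply Rmult_le_compat_l; nra). nra. }
  assert (Z1 : 5 * C1 * l0 <= e / 8 * A).
  { assert (40 * C1 * l0 <= e * n * l0) by (apply Rmult_le_compat_r; [lra| exact H2]).
    assert (e * (n * l0) <= e * A) by (apply Rmult_le_compat_l; lra). nra. }
  assert (Z2 : 11 * C1 * eta * A <= e / 8 * A).
  { assert (0 <= A) by lra. nra. }
  lra.
Qed.

End Main.


Lemma goodA0 (psi : R -> R) (c eta : R) :
  (forall a b, 0 <= a -> a < b -> psi a < psi b) ->
  (forall t, 0 < t -> 0 < psi t) ->
  is_lim psi p_infty p_infty ->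
  is_lim (fun t => psi (t * psi t) / psi t) p_infty 1 ->
  0 < c -> 0 < eta <= 1 ->
  exists A0, 1 <= A0 /\ forall t, A0 <= t -> 3 <= c * psi t /\ psi (c * t * psi t) <= (1 + eta) * psi t.
Proof.
  intros Hinc Hpos Hlim Hslow Hc Heta.
  apply is_lim_spec in Hlim. apply is_lim_spec in Hslow.
  destruct (Hlim (Rmax (3 / c) c)) as [M2 HM2].
  assert (He3 : 0 < eta / 3) by lra.
  destruct (Hslow (mkposreal _ He3)) as [M1 HM1]. simpl in HM1.
  exists (Rmax 1 (Rmax (M1 + 1) (M2 + 1))).
  pose proof (Rmax_l 1 (Rmax (M1 + 1) (M2 + 1))).
  pose proof (Rmax_r 1 (Rmax (M1 + 1) (M2 + 1))).
  pose proof (Rmax_l (M1 + 1) (M2 + 1)). pose proof (Rmax_r (M1 + 1) (M2 + 1)).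
  split; [lra|]. intros t Ht.
  assert (Ht0 : 0 < t) by lra.
  pose proof (HM2 t ltac:(lra)) as P2.
  pose proof (Rmax_l (3 / c) c). pose proof (Rmax_r (3 / c) c).
  pose proof (Hpos t Ht0) as Pt.
  assert (Hsl : forall y, M1 < y -> 0 < y -> psi (y * psi y) <= (1 + eta / 3) * psi y).
  { intros y Hy Hy0. pose proof (HM1 y Hy) as Q. pose proof (Hpos y Hy0).
    apply Rabs_def2 in Q. destruct Q as [Q _].
    assert (psi (y * psi y) / psi y <= 1 + eta / 3) by lra.
    apply Rmult_le_reg_r with (/ psi y). apply Rinv_0_lt_compat; lra.
    rewrite Rmult_assoc, Rinv_r by nz. rewrite Rmult_1_r. exact H6. }
  split.
  - assert (3 / c < psi t) by lra.
    apply Rmult_lt_compat_l with (r := c) in H5; auto.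
    replace (c * (3 / c)) with 3 in H5 by (field; nz). lra.
  - destruct (Rle_or_lt c 1) as [Hc1|Hc1].
    + assert (psi (c * t * psi t) <= psi (t * psi t)).
      { apply (psi_le psi Hinc). assert (0 < c * t) by nra. nra.
        apply Rmult_le_compat_r; nra. }
      pose proof (Hsl t ltac:(lra) Ht0). nra.
    + assert (Hct : t < c * t) by nra.
      assert (psi t <= psi (c * t)) by (apply (psi_le psi Hinc); lra).
      assert (psi (c * t * psi t) <= psi (c * t * psi (c * t))).
      { apply (psi_le psi Hinc). assert (0 < c * t) by nra. nra.
        apply Rmult_le_compat_l; nra. }
      pose proof (Hsl (c * t) ltac:(lra) ltac:(lra)).
      assert (c * t <= t * psi t) by nra.
      assert (psi (c * t) <= psi (t * psi t)) by (apply (psi_le psi Hinc); lra).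
      pose proof (Hsl t ltac:(lra) Ht0).
      assert (0 < psi (c * t)) by (apply Hpos; lra).
      assert (psi (c * t) <= (1 + eta / 3) * psi t) by lra.
      assert ((1 + eta / 3) * psi (c * t) <= (1 + eta / 3) * ((1 + eta / 3) * psi t)) by (apply Rmult_le_compat_l; lra).
      nra.
Qed.

Theorem lemma2p4 (psi : R -> R) :
  in_Psi psi ->
  is_lim (fun t => psi (t * psi t) / psi t) p_infty 1 ->
  forall (x : R -> R), pos_decr_rearranged x -> in_M_psi psi x ->
  forall c : R, 0 < c ->
  is_lim (fun T =>
      / ln T * RInt (fun t => / (t * psi t) * RInt x 0 (c * t * psi t)) 1 T
    - / ln T * RInt (fun t => / (t * psi t) * RInt x 0 t) 1 T)
    p_infty 0.
Proof.
  intros [Hconc [Hinc [Hlim [HO Hsmall]]]] Hslow x [Hxpos [Hxdec _]] [[B HB] [C HC']] c Hc.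
  pose proof (psi_pos psi Hinc HO) as Hpos.
  assert (HC : forall t, 0 < t -> F x t <= C * psi t) by exact HC'.
  apply is_lim_spec. intros [e He]. simpl.
  assert (HC1 : 1 <= C1 C) by (unfold C1; pose proof (Rabs_pos C); lra).
  set (eta := Rmin 1 (e / (88 * C1 C))).
  assert (Heta : 0 < eta <= 1).
  { unfold eta. split. apply Rmin_glb_lt. lra. apply Rdiv_lt_0_compat; lra. apply Rmin_l. }
  assert (Heta2 : 88 * C1 C * eta <= e).
  { assert (eta <= e / (88 * C1 C)) by apply Rmin_r.
    apply Rmult_le_compat_l with (r := 88 * C1 C) in H; [|lra].
    replace (88 * C1 C * (e / (88 * C1 C))) with e in H by (field; nz). lra. }
  destruct (goodA0 psi c eta Hinc Hpos Hlim Hslow Hc Heta) as [A0 [HA0 Hgood]].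
  set (K0 := RInt (D psi x c) 1 A0).
  destruct (nfloor_ex (40 * C1 C / e)) as [n0 Hn0].
  { apply Rdiv_le_0_compat; lra. }
  set (Mn := S n0).
  assert (HMn : 40 * C1 C <= e * INR Mn).
  { unfold Mn. rewrite S_INR. destruct Hn0 as [_ Hn0].
    apply Rmult_lt_compat_l with (r := e) in Hn0; auto.
    replace (e * (40 * C1 C / e)) with (40 * C1 C) in Hn0 by (field; nz). lra. }
  set (sa' := sa psi c A0).
  exists (Rmax (sa' Mn) (exp (4 * Rabs K0 / e))).
  intros T HT.
  pose proof (Rmax_l (sa' Mn) (exp (4 * Rabs K0 / e))).
  pose proof (Rmax_r (sa' Mn) (exp (4 * Rabs K0 / e))).
  pose proof (sa_ge psi c A0 eta HA0 Heta Hgood Mn) as [SaM _]. fold sa' in SaM.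
  assert (HT1 : 1 < T) by lra.
  assert (HN : exists N, sa' N <= T < sa' (S N)).
  { destruct (nfloor_ex T) as [j Hj]; [lra|].
    assert (Hj2 : T < sa' (S j)).
    { pose proof (sa_lin psi c A0 eta HA0 Heta Hgood (S j)). rewrite S_INR in H1. fold sa' in H1. lra. }
    clear Hj. revert Hj2. generalize (S j). intros m. induction m; intros Hm.
    - simpl in Hm. unfold sa' in Hm. simpl in Hm. lra.
    - destruct (Rlt_or_le T (sa' m)). apply IHm; auto. exists m. lra. }
  destruct HN as [N [HN1 HN2]].
  assert (HNM : (Mn <= N)%nat).
  { destruct (le_lt_dec Mn N); auto.
    assert (sa' (S N) <= sa' Mn) by (apply (sa_mono psi c A0 eta HA0 Heta Hgood); lia). lra. }
  assert (HN0 : (1 <= N)%nat) by (unfold Mn in HNM; lia).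
  assert (HMN : 40 * C1 C <= e * INR N).
  { assert (INR Mn <= INR N) by (apply le_INR; auto). nra. }
  destruct (main_est psi x c B C Hconc Hinc Hpos Hxpos Hxdec HB Hc HC A0 eta HA0 Heta Hgood N T ltac:(fold sa'; lra))
    as [R0 [R1 R2]].
  pose proof (main_num psi c C Hinc Hpos Hc A0 eta HA0 Heta Hgood e N He Heta2 HMN HN0) as R3.
  assert (EX : RInt (fun t => / (t * psi t) * RInt x 0 (c * t * psi t)) 1 T
             - RInt (fun t => / (t * psi t) * RInt x 0 t) 1 T = K0 + RInt (D psi x c) A0 T).
  { assert (E1 : RInt (D psi x c) 1 T = RInt (f1 psi x c) 1 T - RInt (f2 psi x) 1 T).
    { assert (X1 : ex_RInt (f1 psi x c) 1 T) by (apply (f1_ex psi x c B); auto; lra).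
      assert (X2 : ex_RInt (f2 psi x) 1 T) by (apply (f2_ex psi x B); auto; lra).
      exact (RInt_minus (f1 psi x c) (f2 psi x) 1 T X1 X2). }
    unfold f1, f2, F in E1. rewrite <- E1. unfold K0.
    rewrite <- (RInt_Chasles (D psi x c) 1 A0 T). reflexivity.
    apply (D_ex psi x c B); auto; lra. apply (D_ex psi x c B); auto; lra. }
  rewrite Rminus_0_r.
  rewrite <- Rmult_minus_distr_l, EX.
  assert (HlnT : 4 * Rabs K0 / e <= ln T).
  { rewrite <- (ln_exp (4 * Rabs K0 / e)). apply ln_le. apply exp_pos. lra. }
  assert (Hln0 : 0 < ln T) by (rewrite <- ln_1; apply ln_increasing; lra).
  assert (HK : Rabs K0 <= e / 4 * ln T).
  { assert (4 * Rabs K0 / e * e = 4 * Rabs K0) by (field; nz). nra. }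
  assert (HX : Rabs (K0 + RInt (D psi x c) A0 T) <= e / 2 * ln T).
  { eapply Rle_trans. apply Rabs_triang. rewrite (Rabs_right (RInt _ _ _)) by lra.
    assert (e / 4 * Asum psi c A0 N <= e / 4 * ln T) by (apply Rmult_le_compat_l; lra). lra. }
  rewrite Rabs_mult. rewrite (Rabs_right (/ ln T)).
  2:{ left. apply Rinv_0_lt_compat; auto. }
  apply Rmult_lt_reg_l with (ln T); auto.
  rewrite <- Rmult_assoc, Rinv_r, Rmult_1_l by nz. nra.
Qed.
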